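(* Let $(\Omega,\Sigma,\mu)$ be a measure space with $\mu$ a positive countably additive measure, let $\rho:\Omega\to[0,\infty)$ be measurable, and let $f,g_1,\dots,g_n,h$ be real-valued measurable functions on $\Omega$ with $\int_\Omega\rho|u|^2\,d\mu<\infty$ for each $u\in\{f,g_1,\dots,g_n,h\}$. Writing $\int_\Omega\rho uv\,d\mu$ for $\int_\Omega\rho(s)u(s)v(s)\,d\mu(s)$, we have \[ \sum_{i=1}^n\begin{vmatrix}\int_\Omega\rho fg_i\,d\mu & \int_\Omega\rho fh\,d\mu\\ \int_\Omega\rho g_ih\,d\mu & \int_\Omega\rho h^2\,d\mu\end{vmatrix}^2 \le \begin{vmatrix}\int_\Omega\rho f^2\,d\mu & \int_\Omega\rho fh\,d\mu\\ \int_\Omega\rho fh\,d\mu & \int_\Omega\rho h^2\,d\mu\end{vmatrix} \times\left\{\max_{1\le i\le n}\begin{vmatrix}\int_\Omega\rho g_i^2\,d\mu & \int_\Omega\rho g_ih\,d\mu\\ \int_\Omega\rho g_ih\,d\mu & \int_\Omega\rho h^2\,d\mu\end{vmatrix} +\Bigg(\sum_{1\le i\ne j\le n}\begin{vmatrix}\int_\Omega\rho g_jg_i\,d\mu & \int_\Omega\rho g_jh\,d\mu\\ \int_\Omega\rho g_ih\,d\mu & \int_\Omega\rho h^2\,d\mu\end{vmatrix}^2\Bigg)^{1/2}\right\}. \]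
   Context: $\begin{vmatrix}a&b\\c&d\end{vmatrix}=ad-bc$ denotes a $2\times2$ determinant. The sum $\sum_{1\le i\ne j\le n}$ runs over all ordered pairs $(i,j)$ with $i\ne j$. *)

(* Defs.v *)
From HB Require Import structures.
From mathcomp Require Import all_boot all_order all_algebra.
From mathcomp Require Import all_classical all_reals all_analysis.
Set Implicit Arguments. Unset Strict Implicit. Unset Printing Implicit Defensive.
Import Order.TTheory GRing.Theory Num.Theory.
Local Open Scope ring_scope.

Definition det2 (R : ringType) (a b c d : R) : R := a * d - b * c.

Definition wint (d : measure_display) (T : measurableType d) (R : realType)
  (mu : {measure set T -> \bar R}) (rho u v : T -> R) : R :=
  Rintegral mu setT (fun s => rho s * u s * v s).

(* Main.v *)
Require Import Defs.
From HB Require Import structures.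
From mathcomp Require Import all_boot all_order all_algebra.
From mathcomp Require Import all_classical all_reals all_analysis.
Import Order.TTheory GRing.Theory Num.Theory.
Local Open Scope ring_scope.
From mathcomp Require Import ring lra.
Lemma quad_cs (R : rcfType) (a b c : R) : 0 <= c ->
  (forall t, 0 <= a + 2 * t * b + t ^+ 2 * c) -> b ^+ 2 <= a * c.
Proof.
move=> c0 H; have [ce|cn0] := eqVneq c 0.
  rewrite ce in H *.
  have [->|bn0] := eqVneq b 0; first by rewrite expr0n /= mulr0.
  have E : a + 2 * (- (a + 1) / (2 * b)) * b + (- (a + 1) / (2 * b)) ^+ 2 * 0 = -1.
    by field.
  by have := H (- (a + 1) / (2 * b)); rewrite E ler0N1.
have cp : 0 < c by rewrite lt_def cn0 c0.
have := H (- (b / c)); set e := b / c => He.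
have be : b = e * c by rewrite /e divfK.
rewrite be in He *; have := mulr_ge0 (ltW cp) He; nra.
Qed.

Lemma expand_aux (R : rcfType) (a b c t : R) :
  a + 2 * t * b + t ^+ 2 * c = t * (t * c + b) + (t * b + a).
Proof. ring. Qed.

Section Form.
Variables (R : rcfType) (A : Type) (P : (A -> R) -> Prop).
Hypothesis HP0 : P (fun _ => 0).
Hypothesis HPc : forall a x y, P x -> P y -> P (fun s => a * x s + y s).

Definition fsym (Q : (A -> R) -> (A -> R) -> R) :=
  forall x y, P x -> P y -> Q x y = Q y x.
Definition flin (Q : (A -> R) -> (A -> R) -> R) :=
  forall a x y w, P x -> P y -> P w -> Q (fun s => a * x s + y s) w = a * Q x w + Q y w.
Definition fpos (Q : (A -> R) -> (A -> R) -> R) := forall x, P x -> 0 <= Q x x.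

Lemma form_CS Q : fsym Q -> flin Q -> fpos Q -> forall x y, P x -> P y ->
  Q x y ^+ 2 <= Q x x * Q y y.
Proof.
move=> Hs Hl Hp x y Px Py; apply: quad_cs; first exact: Hp.
move=> t; have Pw := HPc t y x Py Px.
set w := (fun s => t * y s + x s) in Pw *.
have E1 : Q w w = t * Q y w + Q x w by apply: Hl.
have E2 : Q y w = t * Q y y + Q x y by rewrite Hs //; apply: Hl.
have E3 : Q x w = t * Q y x + Q x x by rewrite Hs //; apply: Hl.
have := Hp _ Pw; rewrite E1 E2 E3 (Hs y x) //.
move=> H; suff -> : Q x x + 2 * t * Q x y + t ^+ 2 * Q y y = t * (t * Q y y + Q x y) + (t * Q x y + Q x x) by [].
exact: expand_aux.
Qed.

Lemma form_sum Q I (r : seq I) (c : I -> R) (F : I -> A -> R) :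
  flin Q -> (forall i, P (F i)) ->
  P (fun s => \sum_(i <- r) c i * F i s) /\
  forall w, P w -> Q (fun s => \sum_(i <- r) c i * F i s) w = \sum_(i <- r) c i * Q (F i) w.
Proof.
move=> Hl PF; elim: r => [|a r [IHP IHQ]].
  have -> : (fun s => \sum_(i <- [::]) c i * F i s) = (fun _ => 0).
    by apply: funext => s; rewrite big_nil.
  split => // w Pw; rewrite big_nil.
  have := Hl 1 (fun _ => 0) (fun _ => 0) w HP0 HP0 Pw.
  have -> : (fun s : A => 1 * (0:R) + 0) = (fun _ => 0).
    by apply: funext => s; rewrite mul1r addr0.
  move=> E; lra.
have -> : (fun s => \sum_(i <- a :: r) c i * F i s)
        = (fun s => c a * F a s + (fun s => \sum_(i <- r) c i * F i s) s).
  by apply: funext => s; rewrite big_cons.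
split; first exact: HPc.
by move=> w Pw; rewrite Hl // IHQ // big_cons.
Qed.

End Form.
Arguments fsym {R A}.
Arguments flin {R A}.
Arguments fpos {R A}.

Lemma finite_CS (R : rcfType) (n : nat) (x y : 'I_n -> 'I_n -> R) :
  (\sum_i \sum_(j | j != i) x i j * y i j) ^+ 2 <=
  (\sum_i \sum_(j | j != i) x i j ^+ 2) * (\sum_i \sum_(j | j != i) y i j ^+ 2).
Proof.
pose Q (u v : 'I_n * 'I_n -> R) := \sum_i \sum_(j | j != i) u (i, j) * v (i, j).
have Hs : fsym (fun _ => True) Q.
  by move=> u v _ _; apply: eq_bigr => i _; apply: eq_bigr => j _; rewrite mulrC.
have Hl : flin (fun _ => True) Q.
  move=> a u v w _ _ _; rewrite /Q mulr_sumr -big_split; apply: eq_bigr => i _.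
  rewrite mulr_sumr -big_split; apply: eq_bigr => j _ /=.
  by rewrite mulrDl mulrA.
have Hp : fpos (fun _ => True) Q.
  by move=> u _; apply: sumr_ge0 => i _; apply: sumr_ge0 => j _; rewrite -expr2 sqr_ge0.
have := @form_CS R _ (fun _ => True) (fun _ _ _ _ _ => I) Q Hs Hl Hp
   (fun p => x p.1 p.2) (fun p => y p.1 p.2) I I.
rewrite /Q /= => H; apply: (le_trans H); rewrite le_eqVlt; apply/orP; left.
by apply/eqP; congr (_ * _); apply: eq_bigr => i _; apply: eq_bigr => j _; rewrite expr2.
Qed.

Lemma main_form (R : rcfType) (A : Type) (P : (A -> R) -> Prop)
  (HP0 : P (fun _ => 0))
  (HPc : forall a x y, P x -> P y -> P (fun s => a * x s + y s))
  (K : (A -> R) -> (A -> R) -> R) (n : nat) (f : A -> R) (g : 'I_n -> A -> R) :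
  fsym P K -> flin P K -> fpos P K -> P f -> (forall i, P (g i)) ->
  \sum_(i < n) K f (g i) ^+ 2 <= K f f *
    (\big[Num.max/0]_(i < n) K (g i) (g i)
     + Num.sqrt (\sum_(i < n) \sum_(j < n | j != i) K (g j) (g i) ^+ 2)).
Proof.
move=> Hs Hl Hp Pf Pg.
set c := fun i => K f (g i).
set S := \sum_(i < n) K f (g i) ^+ 2.
set M := \big[Num.max/0]_(i < n) K (g i) (g i).
set Y := \sum_(i < n) \sum_(j < n | j != i) K (g j) (g i) ^+ 2.
have [Pv Hv] := @form_sum R A P HP0 HPc K 'I_n (index_enum 'I_n) c g Hl Pg.
set v := (fun s => \sum_(i <- index_enum 'I_n) c i * g i s) in Pv Hv.
have S0 : 0 <= S by apply: sumr_ge0 => i _; apply: sqr_ge0.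
have Kfv : K f v = S.
  rewrite Hs // Hv //; apply: eq_bigr => i _; by rewrite Hs // expr2.
have Kvv : K v v = \sum_i c i * \sum_j c j * K (g j) (g i).
  rewrite Hv //; apply: eq_bigr => i _; by rewrite Hs // Hv.
have CS := @form_CS R A P HPc K Hs Hl Hp f v Pf Pv.
rewrite Kfv in CS.
have M0 : 0 <= M by apply: bigmax_ge_id.
have F0 : 0 <= Num.sqrt Y by apply: sqrtr_ge0.
have Kff0 : 0 <= K f f by apply: Hp.
set T := \sum_i \sum_(j | j != i) (c i * c j) * K (g j) (g i).
have Kvv2 : K v v = \sum_i c i ^+ 2 * K (g i) (g i) + T.
  rewrite Kvv /T -big_split; apply: eq_bigr => i _ /=.
  rewrite (bigD1 i) //= mulrDr expr2 mulrA; congr (_ + _).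
  by rewrite mulr_sumr; apply: eq_bigr => j _; rewrite mulrA.
have B1 : \sum_i c i ^+ 2 * K (g i) (g i) <= S * M.
  rewrite /S mulr_suml; apply: ler_sum => i _.
  by apply: ler_wpM2l; [apply: sqr_ge0 | apply: le_bigmax].
set X := \sum_i \sum_(j | j != i) (c i * c j) ^+ 2.
have XS : X <= S ^+ 2.
  have -> : S ^+ 2 = \sum_i \sum_j (c i * c j) ^+ 2.
    rewrite expr2 {1}/S mulr_suml; apply: eq_bigr => i _.
    rewrite mulr_sumr; apply: eq_bigr => j _; by rewrite exprMn.
  apply: ler_sum => i _; rewrite [X in _ <= X](bigD1 i) //=.
  by rewrite lerDr sqr_ge0.
have TXY : T ^+ 2 <= X * Y by exact: (@finite_CS R n (fun i j => c i * c j) (fun i j => K (g j) (g i))).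
have B2 : T <= S * Num.sqrt Y.
  apply: (le_trans (ler_norm T)).
  rewrite -sqrtr_sqr -(ger0_norm S0) -sqrtr_sqr -sqrtrM ?sqr_ge0 //.
  apply: ler_wsqrtr; apply: (le_trans TXY).
  by apply: ler_wpM2r => //; apply: sumr_ge0 => i _; apply: sumr_ge0 => j _; apply: sqr_ge0.
have Hvv : K v v <= S * (M + Num.sqrt Y) by rewrite Kvv2 mulrDr; apply: lerD.
have [S0e|Sp] := eqVneq S 0.
  by rewrite S0e; apply: mulr_ge0 => //; apply: addr_ge0.
have Sp' : 0 < S by rewrite lt_def Sp S0.
have : S * S <= S * (K f f * (M + Num.sqrt Y)).
  rewrite -expr2 (le_trans CS) // mulrCA.
  by apply: ler_wpM2l.
by rewrite ler_pM2l.
Qed.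
Section M.
Variables (d : measure_display) (T : measurableType d) (R : realType)
  (mu : {measure set T -> \bar R}) (rho : T -> R).
Hypothesis mrho : measurable_fun setT rho.
Hypothesis rho0 : forall s, 0 <= rho s.

Definition PL (u : T -> R) := measurable_fun setT u /\
  mu.-integrable setT (fun s => (rho s * `|u s| ^+ 2)%:E).

Lemma PL_int (u : T -> R) : PL u ->
  mu.-integrable setT (fun s => (rho s * u s * u s)%:E).
Proof.
move=> [mu_ iu]; apply: (eq_integrable measurableT _ _ _ iu) => s _.
by rewrite real_normK ?num_real // expr2 mulrA.
Qed.

Lemma PL_prod (u w : T -> R) : PL u -> PL w ->
  mu.-integrable setT (EFin \o (fun s => rho s * u s * w s)).
Proof.
move=> [mu_ iu] [mw iw].
apply: (@le_integrable _ _ _ mu setT measurableT _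
   ((fun s => (rho s * `|u s| ^+ 2)%:E) \+ (fun s => (rho s * `|w s| ^+ 2)%:E))).
- apply/measurable_realfun.measurable_EFinP; apply: measurable_realfun.measurable_funM => //; exact: measurable_realfun.measurable_funM.
- move=> s _ /=; rewrite lee_fin.
  rewrite (ger0_norm (x := _ + _)); last by apply: addr_ge0; apply: mulr_ge0.
  rewrite -mulrA normrM (ger0_norm (rho0 s)) -mulrDr; apply: ler_wpM2l => //.
  rewrite normrM; have := sqr_ge0 (`|u s| - `|w s|); nra.
- by apply: integrableD.
Qed.

Lemma PL0 : PL (fun _ => 0).
Proof.
split; first exact: measurable_cst.
apply: (eq_integrable measurableT _ _ _ (integrable0 mu setT)) => s _.
by rewrite normr0 expr0n /= mulr0.
Qed.

Lemma PLc a x y : PL x -> PL y -> PL (fun s => a * x s + y s).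
Proof.
move=> [mx ix] [my iy]; have mc : measurable_fun setT (fun s => a * x s + y s).
  by apply: measurable_realfun.measurable_funD => //; apply: measurable_realfun.measurable_funM.
split => //.
have Hg : mu.-integrable setT ((fun s => ((2 * a ^+ 2)%:E * (rho s * `|x s| ^+ 2)%:E)%E) \+
    (fun s => ((2:R)%:E * (rho s * `|y s| ^+ 2)%:E)%E)).
  by apply: integrableD => //; apply: integrableZl.
apply: (le_integrable measurableT _ _ Hg).
- apply/measurable_realfun.measurable_EFinP; apply: measurable_realfun.measurable_funM => //.
  apply: measurable_realfun.measurable_funX; exact: measurableT_comp.
- move=> s _ /=; rewrite lee_fin !real_normK ?num_real //.
  have r0 := rho0 s.
  rewrite (ger0_norm (mulr_ge0 r0 (sqr_ge0 _))).
  have h1 : 0 <= 2 * a ^+ 2 * (rho s * x s ^+ 2).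
    by apply: mulr_ge0; [apply: mulr_ge0 => //; apply: sqr_ge0 | apply: mulr_ge0 => //; apply: sqr_ge0].
  have h2 : 0 <= 2 * (rho s * y s ^+ 2).
    by apply: mulr_ge0 => //; apply: mulr_ge0 => //; apply: sqr_ge0.
  rewrite ger0_norm; last exact: addr_ge0.
  have := mulr_ge0 r0 (sqr_ge0 (a * x s - y s)); nra.
Qed.

Lemma wint_sym : fsym PL (wint mu rho).
Proof.
move=> x y _ _; rewrite /wint; congr Rintegral; apply: funext => s.
by rewrite mulrAC.
Qed.

Lemma wint_lin : flin PL (wint mu rho).
Proof.
move=> a x y w Px Py Pw; rewrite /wint.
have -> : (fun s => rho s * (a * x s + y s) * w s) =
  (fun s => a * (rho s * x s * w s) + rho s * y s * w s).
  by apply: funext => s; ring.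
rewrite RintegralD //; last exact: PL_prod.
  by rewrite RintegralZl //; exact: PL_prod.
apply: (eq_integrable measurableT _ _ _ (integrableZl measurableT a (PL_prod _ _ Px Pw))) => s _.
by rewrite /= EFinM.
Qed.

Lemma wint_pos : fpos PL (wint mu rho).
Proof.
move=> x _; apply: Rintegral_ge0 => s _.
rewrite -mulrA; apply: mulr_ge0 => //; rewrite -expr2; exact: sqr_ge0.
Qed.

End M.
Arguments PL {d T R}.

Theorem proposition5p1 (d : measure_display) (T : measurableType d) (R : realType)
  (mu : {measure set T -> \bar R}) (rho : T -> R) (n : nat)
  (f h : T -> R) (g : 'I_n -> T -> R) :
  measurable_fun setT rho -> (forall s, 0 <= rho s) ->
  measurable_fun setT f -> measurable_fun setT h ->
  (forall i, measurable_fun setT (g i)) ->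
  mu.-integrable setT (fun s => (rho s * `|f s| ^+ 2)%:E) ->
  mu.-integrable setT (fun s => (rho s * `|h s| ^+ 2)%:E) ->
  (forall i, mu.-integrable setT (fun s => (rho s * `|g i s| ^+ 2)%:E)) ->
  let I := wint mu rho in
  \sum_(i < n) (det2 (I f (g i)) (I f h) (I (g i) h) (I h h)) ^+ 2
  <= det2 (I f f) (I f h) (I f h) (I h h) *
     (\big[Num.max/0]_(i < n) det2 (I (g i) (g i)) (I (g i) h) (I (g i) h) (I h h)
      + Num.sqrt (\sum_(i < n) \sum_(j < n | j != i)
            (det2 (I (g j) (g i)) (I (g j) h) (I (g i) h) (I h h)) ^+ 2)).
Proof.
intros mrho rho0 mf mh mg Hif Hih Hig. cbv zeta. set Int := wint mu rho.
have Pf : PL mu rho f by exact: (conj mf Hif).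
have Ph : PL mu rho h by exact: (conj mh Hih).
have Pg : forall i, PL mu rho (g i) by move=> i; exact: (conj (mg i) (Hig i)).
have HP0 : PL mu rho (fun _ => 0) by apply: PL0.
have HPc : forall a x y, PL mu rho x -> PL mu rho y -> PL mu rho (fun s => a * x s + y s).
  by move=> a x y; apply: PLc.
have Hs : fsym (PL mu rho) Int by apply: wint_sym.
have Hl : flin (PL mu rho) Int by apply: wint_lin.
have Hp : fpos (PL mu rho) Int by apply: wint_pos.
pose B (x y : T -> R) := Int x y * Int h h - Int x h * Int y h.
have Bs : fsym (PL mu rho) B.
  by move=> x y Px Py; rewrite /B (Hs x y) // [Int x h * _]mulrC.
have Bl : flin (PL mu rho) B.
  move=> a x y w Px Py Pw; rewrite /B !Hl //.
  ring.
have Bp : fpos (PL mu rho) B.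
  move=> x Px; rewrite /B subr_ge0 -expr2.
  exact: (@form_CS _ _ _ HPc _ Hs Hl Hp x h Px Ph).
have H := @main_form _ _ _ HP0 HPc B n f g Bs Bl Bp Pf Pg.
rewrite /B in H; rewrite /det2. exact H.
Qed.
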